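(* Let $1<p\le2$ and $\varepsilon\in(0,3)$. For all sufficiently large $n$ (depending on $p,\varepsilon$) there exists an approximately convex set $A\subseteq\ell_p^n$ such that $$\mathcal{H}(A,\operatorname{Co}(A))\ge\log_2 n-\varepsilon\qquad\text{and}\qquad\operatorname{diam}(A)\le\frac{25}{\varepsilon}\,n^{(p-1)/p}(\log_2 n)^2 .$$
   Context: $\ell_p^n$ is $\mathbb{R}^n$ with the norm $(\sum|a_i|^p)^{1/p}$. A set $A$ is approximately convex if $d(tx+(1-t)y,A)\le1$ for all $x,y\in A$, $t\in[0,1]$, where $d(x,A)=\inf_{a\in A}\|x-a\|$. $\mathcal{H}$ is the Hausdorff distance, $\operatorname{Co}$ the convex hull, $\operatorname{diam}(A)=\sup\{\|x-y\|:x,y\in A\}$. *)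

(* Defs.v *)
From HB Require Import structures.
From mathcomp Require Import all_boot all_order all_algebra.
From mathcomp Require Import all_classical all_reals all_analysis.
Set Implicit Arguments. Unset Strict Implicit. Unset Printing Implicit Defensive.
Import Order.TTheory GRing.Theory Num.Theory.
Local Open Scope classical_set_scope.
Local Open Scope ring_scope.

Section Defs.
Variable R : realType.

Definition pnorm (p : R) (n : nat) (x : 'rV[R]_n) : R :=
  (\sum_(i < n) `|x ord0 i| `^ p) `^ (p^-1).

(* d(x,A) = inf_{a in A} ||x - a||, in the extended reals (+oo for empty A) *)
Definition dist_set (p : R) (n : nat) (x : 'rV[R]_n) (A : set 'rV[R]_n) : \bar R :=
  ereal_inf [set (pnorm p (x - a))%:E | a in A].

Definition approx_convex (p : R) (n : nat) (A : set 'rV[R]_n) : Prop :=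
  forall x y t, A x -> A y -> 0 <= t <= 1 ->
    (dist_set p (t *: x + (1 - t) *: y) A <= 1%:E)%E.

Definition hausdorff (p : R) (n : nat) (A B : set 'rV[R]_n) : \bar R :=
  maxe (ereal_sup [set dist_set p a B | a in A])
       (ereal_sup [set dist_set p b A | b in B]).

Definition conv_hull (n : nat) (A : set 'rV[R]_n) : set 'rV[R]_n :=
  [set x | exists (k : nat) (w : 'I_k -> R) (a : 'I_k -> 'rV[R]_n),
      (forall i, 0 <= w i) /\ \sum_(i < k) w i = 1 /\
      (forall i, A (a i)) /\ x = \sum_(i < k) w i *: a i].

Definition diam (p : R) (n : nat) (A : set 'rV[R]_n) : \bar R :=
  ereal_sup [set (pnorm p (x - y))%:E | x in A & y in A].

Definition log2 (x : R) : R := ln x / ln 2.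

End Defs.

(* Main.v *)
Require Import Defs.
From HB Require Import structures.
From mathcomp Require Import all_boot all_order all_algebra.
From mathcomp Require Import all_classical all_reals all_analysis.
From mathcomp.algebra_tactics Require Import ring lra.
From mathcomp Require Import zify.
Import Order.TTheory GRing.Theory Num.Theory.
Local Open Scope classical_set_scope.
Local Open Scope ring_scope.
Section Reals.
Variable R : realType.
Implicit Types a c z t y : R.

Lemma ln_le_sub1 y : 0 < y -> ln y <= y - 1.
Proof.
move=> y0; have := @le_ln1Dx R (y - 1); rewrite subrKC; apply.
lra.
Qed.

Lemma ln2_ge : (1 / 2) <= ln (2 : R).
Proof.
have := @ln_le_sub1 ((1 / 2)) ltac:(by []).
rewrite div1r lnV ?posrE //; lra.
Qed.

Lemma ln2_le1 : ln (2 : R) <= 1.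
Proof. have := @ln_le_sub1 2 ltac:(by []); lra. Qed.

Lemma xlnx_mul t a : 0 <= t -> 0 <= a ->
  (t * a) * ln (t * a) = t * (a * ln a) + a * (t * ln t).
Proof.
rewrite !le_eqVlt => /predU1P[<-|t0]; first by rewrite !(mulr0, mul0r, addr0, add0r).
move=> /predU1P[<-|a0]; first by rewrite !(mulr0, mul0r, addr0, add0r).
rewrite lnM ?posrE //; ring.
Qed.

Lemma xln_mono c z : 0 <= c <= z -> c * ln c <= c * ln z.
Proof.
case/andP; rewrite le_eqVlt => /predU1P[<-|c0] cz; first by rewrite !mul0r.
by rewrite ler_pM2l // ler_ln ?posrE // (lt_le_trans c0).
Qed.

Lemma bin_term t : 0 <= t -> - (t * ln t) <= t * ln 2 + (1 / 2) - t.
Proof.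
rewrite le_eqVlt => /predU1P[<-|t0]; first by rewrite !(mul0r, oppr0, subr0, add0r); lra.
have h := @ln_le_sub1 ((2 * t)^-1) ltac:(by rewrite invr_gt0 mulr_gt0).
rewrite lnV ?posrE ?mulr_gt0 // lnM ?posrE // in h.
have : t * (- (ln 2 + ln t)) <= t * ((2 * t)^-1 - 1) by rewrite ler_pM2l.
rewrite invfM mulrBr mulr1 mulrCA mulfV ?gt_eqF // mulr1; lra.
Qed.

Lemma bin_ent t : 0 <= t <= 1 -> - (t * ln t) - ((1 - t) * ln (1 - t)) <= ln 2.
Proof.
case/andP=> t0 t1; have h1 := @bin_term t t0.
have h2 := @bin_term (1 - t) ltac:(by rewrite subr_ge0).
lra.
Qed.

End Reals.

Section Ent.
Variable R : realType.
Variable m : nat.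
Implicit Types x y : 'I_m -> R.

Definition Hn x : R := - \sum_i x i * ln (x i).
Definition simplex x := (forall i, 0 <= x i) /\ \sum_i x i = 1.

Lemma simplex_le1 x : simplex x -> forall i, x i <= 1.
Proof.
case=> x0 x1 i; rewrite -x1 (bigD1 i) //= lerDl sumr_ge0 // => j _; exact: x0.
Qed.

Lemma Hn_ge0 x : simplex x -> 0 <= Hn x.
Proof.
move=> hx; rewrite /Hn oppr_ge0 sumr_le0 // => i _.
by apply: mulr_ge0_le0; [exact: hx.1 | apply: ln_le0; exact: simplex_le1 hx i].
Qed.

Lemma Hn_conv x y t : simplex x -> simplex y -> 0 <= t <= 1 ->
  Hn (fun i => t * x i + (1 - t) * y i) <= t * Hn x + (1 - t) * Hn y + ln 2.
Proof.
move=> [x0 x1] [y0 y1] /andP[t0 t1].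
have t1' : 0 <= 1 - t by rewrite subr_ge0.
have key : \sum_i (t * (x i * ln (x i)) + x i * (t * ln t) +
     ((1 - t) * (y i * ln (y i)) + y i * ((1 - t) * ln (1 - t))))
   <= \sum_i (t * x i + (1 - t) * y i) * ln (t * x i + (1 - t) * y i).
  apply: ler_sum => i _.
  rewrite -xlnx_mul // -xlnx_mul // (mulrDl (t * x i)).
  apply: lerD; apply: xln_mono.
    by rewrite mulr_ge0 //= lerDl mulr_ge0.
  by rewrite mulr_ge0 //= lerDr mulr_ge0.
rewrite !big_split /= -!mulr_sumr -!mulr_suml x1 y1 !mul1r in key.
rewrite /Hn; have := @bin_ent R t ltac:(by rewrite t0 t1).
lra.
Qed.

Lemma Hn_le (m0 : (0 < m)%N) x : simplex x -> Hn x <= ln m%:R.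
Proof.
move=> [x0 x1].
have mp : 0 < (m%:R : R) by rewrite ltr0n.
have term : forall a : R, 0 <= a -> - (a * ln a) <= m%:R^-1 - a + a * ln m%:R.
  move=> a; rewrite le_eqVlt => /predU1P[<-|a0].
    by rewrite !(mul0r, oppr0, subr0, addr0); rewrite invr_ge0 ltW.
  have h := @ln_le_sub1 R ((m%:R * a)^-1) ltac:(by rewrite invr_gt0 mulr_gt0).
  rewrite lnV ?posrE ?mulr_gt0 // lnM ?posrE // in h.
  have : a * (- (ln m%:R + ln a)) <= a * ((m%:R * a)^-1 - 1) by rewrite ler_pM2l.
  rewrite invfM mulrBr mulr1 mulrCA mulfV ?gt_eqF // mulr1; lra.
have : \sum_i - (x i * ln (x i)) <= \sum_i (m%:R^-1 - x i + x i * ln m%:R).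
  by apply: ler_sum => i _; exact: term.
have hm : m%:R^-1 *+ m = 1 :> R by rewrite -(mulr_natr (m%:R^-1) m) mulVf ?gt_eqF.
rewrite !big_split /= -mulr_suml x1 mul1r sumr_const card_ord hm.
rewrite !sumrN x1 /Hn; lra.
Qed.

Lemma KL_le (m0 : (0 < m)%N) x : simplex x ->
  ln m%:R - Hn x <= (1 + ln m%:R) * \sum_i `|x i - m%:R^-1|.
Proof.
move=> hx; have [x0 x1] := hx.
have mp : 0 < (m%:R : R) by rewrite ltr0n.
have lm0 : 0 <= ln (m%:R : R) by rewrite ln_ge0 // ler1n.
have term : forall a : R, 0 <= a <= 1 ->
    a * ln m%:R + a * ln a <= (1 + ln m%:R) * `|a - m%:R^-1|.
  move=> a /andP[]; rewrite le_eqVlt => /predU1P[<-|a0] a1.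
    by rewrite !mul0r addr0 mulr_ge0 // addr_ge0.
  rewrite -mulrDr -lnM ?posrE //.
  have [ma1|ma1] := lerP (m%:R * a) 1.
    apply: (@le_trans _ _ 0); last by rewrite mulr_ge0 ?addr_ge0.
    by apply: mulr_ge0_le0; [exact: ltW | exact: ln_le0].
  set u := m%:R^-1; set L := ln (m%:R * a).
  have um : u * m%:R = 1 by rewrite mulVf ?gt_eqF.
  have au : u < a.
    have u0 : 0 < u by rewrite invr_gt0.
    by rewrite -[X in _ < X]mul1r -um -mulrA ltr_pMr.
  have h1 : L <= m%:R * a - 1 by apply: ln_le_sub1; lra.
  have h2 : L <= ln m%:R by rewrite /L ler_ln ?posrE ?mulr_gt0 // ler_piMr // ltW.
  have h3 : u * L <= u * (m%:R * a - 1) by rewrite ler_wpM2l // invr_ge0 ltW.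
  have h4 : (a - u) * L <= (a - u) * ln m%:R by rewrite ler_wpM2l // subr_ge0 ltW.
  have e1 : a * L = u * L + (a - u) * L by ring.
  have e2 : u * (m%:R * a - 1) = a - u by rewrite mulrBr mulrA um mul1r mulr1.
  rewrite ger0_norm; last by rewrite subr_ge0 ltW.
  lra.
have : \sum_i (x i * ln m%:R + x i * ln (x i)) <= \sum_i (1 + ln m%:R) * `|x i - m%:R^-1|.
  by apply: ler_sum => i _; apply: term; rewrite x0 simplex_le1.
by rewrite big_split /= -mulr_suml x1 mul1r -mulr_sumr /Hn; lra.
Qed.

End Ent.
Arguments Hn {R m}.
Arguments simplex {R m}.
Arguments Hn_ge0 {R m x}.
Arguments Hn_le {R m} m0 {x}.
Arguments KL_le {R m} m0 {x}.
Arguments simplex_le1 {R m x}.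

Section Pow.
Variable R : realType.
Variable p : R.
Hypothesis p1 : 1 < p.

Lemma p0 : 0 < p. Proof. exact: lt_trans ltr01 p1. Qed.

Lemma powRV (x r : R) : 0 <= x -> (x^-1) `^ r = (x `^ r)^-1.
Proof. by move=> x0; rewrite -powR_inv1 // -powRrM mulN1r powRN. Qed.

Lemma holder_term (tau v : R) : 0 < tau -> 0 <= v ->
  v <= tau + v `^ p * tau `^ (1 - p).
Proof.
move=> tau0 v0; have [vt|tv] := ltrP v tau.
  by rewrite (le_trans (ltW vt)) // lerDl mulr_ge0 // powR_ge0.
rewrite -mulr_powRB1 // ?p0 // -mulrA.
have e : tau `^ (p - 1) * tau `^ (1 - p) = 1.
  rewrite -powRD; last by apply/implyP => _; rewrite gt_eqF.
  have -> : p - 1 + (1 - p) = 0 by ring.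
  by rewrite powRr0.
have h : tau `^ (p - 1) <= v `^ (p - 1).
  by apply: (ge0_ler_powR (r := p - 1)); rewrite ?subr_ge0 ?nnegrE ?(ltW p1) ?(ltW tau0).
have : v * (tau `^ (p - 1) * tau `^ (1 - p)) <= v * (v `^ (p - 1) * tau `^ (1 - p)).
  by apply: ler_wpM2l => //; apply: ler_wpM2r => //; exact: powR_ge0.
rewrite e mulr1 => h2; apply: (le_trans h2); rewrite lerDr; exact: ltW.
Qed.

Lemma holder_sum m (w : 'I_m -> R) tau : 0 < tau -> (forall i, 0 <= w i) ->
  \sum_i w i <= m%:R * tau + (\sum_i w i `^ p) * tau `^ (1 - p).
Proof.
move=> tau0 w0.
have : \sum_i w i <= \sum_i (tau + w i `^ p * tau `^ (1 - p)).
  by apply: ler_sum => i _; exact: holder_term.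
by rewrite big_split /= sumr_const card_ord -mulr_suml mulr_natl.
Qed.

Lemma pnorm_geK n (v : 'rV[R]_n) K : 0 <= K ->
  K `^ p <= \sum_i `|v ord0 i| `^ p -> K <= pnorm p v.
Proof.
move=> K0 h; have -> : K = (K `^ p) `^ p^-1.
  by rewrite -powRrM mulfV ?gt_eqF ?p0 // powRr1.
apply: (ge0_ler_powR (r := p^-1)) => //; rewrite ?invr_ge0 ?ltW ?p0 // nnegrE ?powR_ge0 //.
by apply: sumr_ge0 => i _; exact: powR_ge0.
Qed.

Lemma pnorm_leK n (v : 'rV[R]_n) K : 0 <= K ->
  \sum_i `|v ord0 i| `^ p <= K `^ p -> pnorm p v <= K.
Proof.
move=> K0 h; have -> : K = (K `^ p) `^ p^-1.
  by rewrite -powRrM mulfV ?gt_eqF ?p0 // powRr1.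
apply: (ge0_ler_powR (r := p^-1)) => //; rewrite ?invr_ge0 ?ltW ?p0 // nnegrE ?powR_ge0 //.
by apply: sumr_ge0 => i _; exact: powR_ge0.
Qed.

Lemma powR_le_self (a : R) : 0 <= a <= 1 -> a `^ p <= a.
Proof.
case/andP; rewrite le_eqVlt => /predU1P[<-|a0] a1.
  by rewrite powR0 // gt_eqF // p0.
by apply: ge1r_powR; rewrite ?a0 ?a1 // ltW.
Qed.

Lemma Mkey (K a n : R) : 0 <= K -> 0 < a -> 0 < n ->
  (K * n `^ ((p - 1) / p) / a) `^ p * (a * (a / n) `^ (p - 1)) = K `^ p.
Proof.
move=> K0 a0 n0.
have pn : p != 0 by rewrite gt_eqF ?p0.
have a0' : 0 <= a^-1 by rewrite invr_ge0 ltW.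
have n0' : 0 <= n^-1 by rewrite invr_ge0 ltW.
have e0 : (K * n `^ ((p - 1) / p) / a) `^ p = K `^ p * (n `^ ((p - 1) / p)) `^ p * (a^-1) `^ p.
  by rewrite powRM ?mulr_ge0 ?powR_ge0 // powRM ?powR_ge0.
have e1 : (n `^ ((p - 1) / p)) `^ p = n `^ (p - 1) by rewrite -powRrM mulfVK.
have e2 : (a / n) `^ (p - 1) = a `^ (p - 1) * (n `^ (p - 1))^-1.
  by rewrite powRM ?(ltW a0) // powRV ?(ltW n0).
have e3 : a * a `^ (p - 1) = a `^ p by rewrite mulr_powRB1 ?(ltW a0) ?p0.
have e4 : (a^-1) `^ p = (a `^ p)^-1 by rewrite powRV ?(ltW a0).
have h1 : a `^ p != 0 by rewrite gt_eqF // powR_gt0.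
have h2 : n `^ (p - 1) != 0 by rewrite gt_eqF // powR_gt0.
rewrite e0 e1 e2 e4 (mulrA a) e3.
move: h1 h2; set A := a `^ p; set B := n `^ (p - 1); set C := K `^ p => h1 h2.
by field; rewrite h1 h2.
Qed.


End Pow.

Section Mx.
Variable R : realType.
Lemma subE k l (A B : 'M[R]_(k, l)) i j : (A - B) i j = A i j - B i j.
Proof. by rewrite !mxE. Qed.
Lemma addE k l (A B : 'M[R]_(k, l)) i j : (A + B) i j = A i j + B i j.
Proof. by rewrite !mxE. Qed.
Lemma scaleE k l (a : R) (A : 'M[R]_(k, l)) i j : (a *: A) i j = a * A i j.
Proof. by rewrite !mxE. Qed.
Lemma deltaE k l (i0 : 'I_k) (j0 : 'I_l) i j :
  (delta_mx i0 j0 : 'M[R]_(k, l)) i j = ((i == i0) && (j == j0))%:R.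
Proof. by rewrite mxE. Qed.
Lemma ln2_gt0 : 0 < ln (2 : R).
Proof. by apply: ln_gt0; rewrite ltr1n. Qed.
End Mx.

Section Construction.
Variable R : realType.
Variables (p : R) (m : nat) (M : R).
Hypotheses (p1 : 1 < p) (m0 : (0 < m)%N) (M0 : 0 < M).

Definition X (v : 'rV[R]_m.+1) (i : 'I_m) : R := v ord0 (lift ord0 i) / M.
Definition Aset : set 'rV[R]_m.+1 :=
  [set v | simplex (X v) /\ Hn (X v) <= ln 2 * v ord0 ord0 <= ln m%:R].

Lemma Aset_s v : Aset v -> 0 <= v ord0 ord0 <= ln m%:R / ln 2.
Proof.
move=> [sv /andP[h1 h2]]; have l2 := @ln2_gt0 R.
have h0 := Hn_ge0 sv.
apply/andP; split.
  by rewrite -(pmulr_rge0 _ l2) (le_trans h0).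
by rewrite ler_pdivlMr // mulrC.
Qed.

Lemma lift_neq0 (i : 'I_m) : (lift ord0 i == ord0) = false.
Proof. by rewrite eq_sym (negbTE (neq_lift _ _)). Qed.

Lemma approx : approx_convex p Aset.
Proof.
move=> v w t [sv /andP[hv1 hv2]] [sw /andP[hw1 hw2]] /andP[t0 t1].
have l2 := @ln2_gt0 R.
set c := t *: v + (1 - t) *: w.
have Xc : X c = (fun i => t * X v i + (1 - t) * X w i).
  by apply: funext => i; rewrite /X addE !scaleE mulrDl !mulrA.
have sc : simplex (X c).
  rewrite Xc; split => [i|].
    by have a := sv.1 i; have b := sw.1 i; rewrite addr_ge0 // mulr_ge0 // subr_ge0.
  by rewrite big_split /= -!mulr_sumr sv.2 sw.2 !mulr1 subrKC.
have u_def : c ord0 ord0 = t * v ord0 ord0 + (1 - t) * w ord0 ord0.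
  by rewrite addE !scaleE.
set u := c ord0 ord0 in u_def *.
have hz := @Hn_conv R m (X v) (X w) t sv sw ltac:(by rewrite t0 t1).
rewrite -Xc in hz.
set h := Hn (X c).
have t1' : 0 <= 1 - t by rewrite subr_ge0.
have hub : h <= ln 2 * (u + 1).
  have a1 : t * Hn (X v) <= t * (ln 2 * v ord0 ord0) by rewrite ler_wpM2l.
  have a2 : (1 - t) * Hn (X w) <= (1 - t) * (ln 2 * w ord0 ord0) by rewrite ler_wpM2l.
  rewrite u_def; lra.
have hle : h <= ln m%:R := Hn_le m0 sc.
have ule : ln 2 * u <= ln m%:R.
  have a1 : t * (ln 2 * v ord0 ord0) <= t * ln m%:R by rewrite ler_wpM2l.
  have a2 : (1 - t) * (ln 2 * w ord0 ord0) <= (1 - t) * ln m%:R by rewrite ler_wpM2l.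
  rewrite u_def; lra.
set s' := if h / ln 2 <= u then u else h / ln 2.
have d01 : 0 <= s' - u <= 1.
  rewrite /s'; case: ifP => H; first by rewrite subrr lexx ler01.
  move/negbT: H; rewrite -ltNge => H.
  apply/andP; split; first by rewrite subr_ge0 ltW.
  by rewrite lerBlDl ler_pdivrMr //; lra.
set c' := c + (s' - u) *: delta_mx ord0 ord0.
have c'l : forall i, c' ord0 (lift ord0 i) = c ord0 (lift ord0 i).
  by move=> i; rewrite /c' (@addE R _ _ c) scaleE deltaE lift_neq0 andbF mulr0 addr0.
have Xc' : X c' = X c by apply: funext => i; rewrite /X c'l.
have c'00 : c' ord0 ord0 = s' by rewrite /c' (@addE R _ _ c) scaleE deltaE eqxx mulr1 subrKC.
have Ac' : Aset c'.
  rewrite /Aset /= Xc' c'00; split => //; apply/andP; split; rewrite /s'; case: ifP => H.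
  - by move: H; rewrite ler_pdivrMr // mulrC.
  - by rewrite mulrC divfK ?gt_eqF.
  - exact: ule.
  - by rewrite mulrC divfK ?gt_eqF.
rewrite /dist_set; apply: le_trans (ereal_inf_lbound _) _.
  by exists c'.
rewrite lee_fin; apply: (@pnorm_leK R p p1) => //; rewrite powR1 big_ord_recl big1 ?addr0.
  rewrite subE c'00 -/u distrC ger0_norm; last by case/andP: d01.
  apply: le_trans (@powR_le_self R p p1 _ d01) _; by case/andP: d01.
by move=> i _; rewrite subE c'l subrr normr0 powR0 // gt_eqF // (@p0 R p p1).
Qed.


Lemma Xmul (v : 'rV[R]_m.+1) (i : 'I_m) : v ord0 (lift ord0 i) = M * X v i.
Proof. by rewrite /X mulrC divfK ?gt_eqF. Qed.

Lemma diam_le v w : Aset v -> Aset w -> ln m%:R / ln 2 <= M ->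
  pnorm p (v - w) <= 3 * M.
Proof.
move=> Av Aw hM.
have /andP[v0 v1] := Aset_s _ Av; have /andP[w0 w1] := Aset_s _ Aw.
have [sv _] := Av; have [sw _] := Aw.
have pp := @p0 R p p1.
apply: (@pnorm_leK R p p1); first by rewrite mulr_ge0 // ltW.
rewrite big_ord_recl.
have b1 : `|(v - w) ord0 ord0| `^ p <= M `^ p.
  apply: (ge0_ler_powR (r := p)); rewrite ?nnegrE ?normr_ge0 ?(ltW pp) ?(ltW M0) //.
  by rewrite subE ler_norml; apply/andP; split; lra.
have b2 : \sum_(i < m) `|(v - w) ord0 (lift ord0 i)| `^ p <= M `^ p * 2.
  have : \sum_(i < m) `|(v - w) ord0 (lift ord0 i)| `^ p <=
         \sum_(i < m) M `^ p * (X v i + X w i).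
    apply: ler_sum => i _.
    have a0 := sv.1 i; have a1 := simplex_le1 sv i.
    have b0 := sw.1 i; have b1' := simplex_le1 sw i.
    rewrite subE !Xmul -mulrBr normrM (gtr0_norm M0) powRM ?normr_ge0 ?(ltW M0) //.
    apply: ler_wpM2l; first exact: powR_ge0.
    apply: le_trans (@powR_le_self R p p1 _ _) _.
      by rewrite normr_ge0 /= ler_norml; apply/andP; split; lra.
    by rewrite (le_trans (ler_normB _ _)) // !ger0_norm.
  by rewrite -mulr_sumr big_split /= sv.2 sw.2.
have e3 : (3 * M) `^ p = 3 `^ p * M `^ p by rewrite powRM ?ltW.
have h3 : 3 <= 3 `^ p :> R by apply: le1r_powR; rewrite ?ler1n ?ltW.
have hm : 0 <= M `^ p := powR_ge0 _ _.
rewrite e3; apply: le_trans (_ : 3 * M `^ p <= _); first lra.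
by rewrite ler_wpM2r.
Qed.

Definition vtx (i : 'I_m) : 'rV[R]_m.+1 := M *: delta_mx ord0 (lift ord0 i).

Lemma vtx_entry i j : vtx i ord0 j = M * (j == lift ord0 i)%:R.
Proof. by rewrite /vtx scaleE deltaE eqxx. Qed.

Lemma X_vtx i : X (vtx i) = fun j => (j == i)%:R.
Proof.
apply: funext => j; rewrite /X vtx_entry (inj_eq (@lift_inj _ ord0)).
rewrite [_ / M]mulrC mulrA mulVf ?mul1r //. by rewrite gt_eqF.
Qed.

Lemma Aset_vtx i : Aset (vtx i).
Proof.
rewrite /Aset /= X_vtx; split.
  split => [j|]; first by rewrite ler0n.
  rewrite (bigD1 i) // eqxx big1 /=; first by rewrite addr0.
  by move=> j /negbTE ->.
have -> : Hn (fun j : 'I_m => ((j == i)%:R : R)) = 0.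
  rewrite /Hn big1 ?oppr0 // => j _; case: eqP => _.
    by rewrite ln1 mulr0.
  by rewrite mul0r.
rewrite vtx_entry eq_sym lift_neq0 mulr0 mulr0 lexx.
by rewrite ln_ge0 // ler1n.
Qed.

Definition b0 : 'rV[R]_m.+1 := \sum_(i < m) m%:R^-1 *: vtx i.

Lemma b0_hull : conv_hull Aset b0.
Proof.
exists m, (fun _ => m%:R^-1), vtx; split; first by move=> i; rewrite invr_ge0 ler0n.
split; last by split => //; exact: Aset_vtx.
rewrite sumr_const card_ord -(mulr_natr (m%:R^-1) m) mulVf //.
by rewrite pnatr_eq0 -lt0n.
Qed.

Lemma b0_entry j : b0 ord0 j = \sum_(i < m) m%:R^-1 * (M * (j == lift ord0 i)%:R).
Proof. by rewrite /b0 summxE; apply: eq_bigr => i _; rewrite scaleE vtx_entry. Qed.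

Lemma b0_00 : b0 ord0 ord0 = 0.
Proof. by rewrite b0_entry big1 // => i _; rewrite eq_sym lift_neq0 !mulr0. Qed.

Lemma b0_l k : b0 ord0 (lift ord0 k) = M * m%:R^-1.
Proof.
rewrite b0_entry (bigD1 k) // eqxx big1 /=.
  by rewrite mulr1 addr0 mulrC.
by move=> i /negbTE ik; rewrite (inj_eq (@lift_inj _ ord0)) eq_sym ik !mulr0.
Qed.

Lemma dist_lb (eps : R) (a : 'rV[R]_m.+1) : Aset a -> 0 < eps ->
  M = (ln m.+1%:R / ln 2) * m.+1%:R `^ ((p - 1) / p) / (eps * ln 2 / (4 * (1 + ln m.+1%:R))) ->
  ln m.+1%:R - ln m%:R <= eps * ln 2 / 2 ->
  ln m.+1%:R / ln 2 - eps <= pnorm p (b0 - a).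
Proof.
move=> Aa e0 hMdef hln.
have l2 := @ln2_gt0 R.
have n1 : 1 < (m.+1%:R : R) by rewrite ltr1n ltnS.
have np : 0 < (m.+1%:R : R) by rewrite ltr0n.
have mp : 0 < (m%:R : R) by rewrite ltr0n.
have Ln0 : 0 < ln (m.+1%:R : R) by apply: ln_gt0.
set n := (m.+1%:R : R) in n1 np Ln0 hMdef hln *.
set K := ln n / ln 2 in hMdef *.
set a0 := eps * ln 2 / (4 * (1 + ln n)) in hMdef *.
have K0 : 0 <= K by rewrite /K divr_ge0 // ltW.
have a0p : 0 < a0 by rewrite /a0 divr_gt0 ?mulr_gt0 // addr_gt0.
have pp := @p0 R p p1.
have [sa /andP[h1 h2]] := Aa.
have /andP[s0 _] := Aset_s _ Aa.
set s := a ord0 ord0 in h1 h2 s0 *.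
have [hs|hs] := lerP (K - eps) s.
  apply: le_trans hs _; apply: (@pnorm_geK R p p1) => //.
  rewrite big_ord_recl subE b0_00 sub0r normrN ger0_norm // lerDl.
  by apply: sumr_ge0 => i _; exact: powR_ge0.
set x := X a in sa h1 *.
set V := \sum_i `|x i - m%:R^-1|.
set S := \sum_i `|x i - m%:R^-1| `^ p.
have hK : ln 2 * K = ln n by rewrite /K mulrC divfK ?gt_eqF.
have hH : Hn x < ln n - eps * ln 2.
  have : ln 2 * s < ln 2 * (K - eps) by rewrite ltr_pM2l.
  lra.
have hKL := KL_le m0 sa.
rewrite -/V in hKL.
have lmn : ln (m%:R : R) <= ln n by rewrite ler_ln ?posrE // /n ler_nat.
have lm0 : 0 <= ln (m%:R : R) by rewrite ln_ge0 // ler1n.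
have V0 : 0 <= V by apply: sumr_ge0 => i _; exact: normr_ge0.
have hV1 : (1 + ln m%:R) * V <= (1 + ln n) * V by rewrite ler_wpM2r // lerD2l.
have h2a : 2 * a0 * (1 + ln n) = eps * ln 2 / 2.
  by rewrite /a0; field; rewrite gt_eqF // addr_gt0.
have hV : 2 * a0 < V.
  have : (2 * a0) * (1 + ln n) < V * (1 + ln n) by lra.
  by rewrite ltr_pM2r // addr_gt0.
set tau := a0 / n.
have tau0 : 0 < tau by rewrite /tau divr_gt0.
have hhold := @holder_sum R p p1 m (fun i => `|x i - m%:R^-1|) tau tau0 (fun i => normr_ge0 _).
rewrite -/V -/S in hhold.
have mtau : m%:R * tau <= a0.
  rewrite /tau mulrCA ler_piMr ?(ltW a0p) //.
  by rewrite ler_pdivrMr // mul1r /n ler_nat.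
have hS : a0 < S * tau `^ (1 - p) by lra.
have e : tau `^ (1 - p) * tau `^ (p - 1) = 1.
  rewrite -powRD; last by apply/implyP => _; rewrite gt_eqF.
  have -> : 1 - p + (p - 1) = 0 by ring.
  by rewrite powRr0.
have hS2 : a0 * tau `^ (p - 1) <= S.
  have : a0 * tau `^ (p - 1) < S * tau `^ (1 - p) * tau `^ (p - 1).
    by rewrite ltr_pM2r // powR_gt0.
  by rewrite -mulrA e mulr1 => /ltW.
have key := @Mkey R p p1 K a0 n K0 a0p np.
rewrite -/tau -hMdef in key.
have lnK : K - eps <= K by lra.
apply: le_trans lnK _.
apply: (@pnorm_geK R p p1) => //.
rewrite -key big_ord_recl.
apply: le_trans (_ : M `^ p * S <= _).
  by rewrite ler_wpM2l // powR_ge0.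
have -> : M `^ p * S = \sum_(i < m) `|(b0 - a) ord0 (lift ord0 i)| `^ p.
  rewrite /S mulr_sumr; apply: eq_bigr => i _.
  rewrite subE b0_l Xmul -/x -mulrBr normrM gtr0_norm // powRM ?(ltW M0) ?normr_ge0 //.
  by rewrite distrC.
by rewrite lerDr powR_ge0.
Qed.

End Construction.

Theorem corollary4p2 (R : realType) (p eps : R) :
  1 < p <= 2 -> 0 < eps < 3 ->
  exists N : nat, forall n : nat, (N <= n)%N ->
    exists A : set 'rV[R]_n,
      A !=set0 /\ approx_convex p A /\
      (((log2 n%:R - eps)%:E <= hausdorff p A (conv_hull A))%E /\
       (diam p A <= (25 / eps * n%:R `^ ((p - 1) / p) * log2 n%:R ^+ 2)%:E)%E).
Proof.
move=> /andP[p1 p2] /andP[e0 e3].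
exists (Num.Def.trunc (4 / eps) + 5)%N => n.
case: n => [|m] hm; first by move: hm; lia.
have hm' : ((Num.Def.trunc (4 / eps)).+1 <= m)%N.
  by move: hm; lia.
have m4 : (4 <= m)%N by move: hm; lia.
have m0 : (0 < m)%N by apply: leq_trans m4.
have meps : 4 / eps < m%:R.
  apply: lt_le_trans (real_truncnS_gt _) _; first by apply: ger0_real; rewrite divr_ge0 // (ltW e0).
  by rewrite ler_nat.
have l2 := @ln2_gt0 R.
have l2h := @ln2_ge R.
have l21 := @ln2_le1 R.
have np : 0 < (m.+1%:R : R) by rewrite ltr0n.
have mp : 0 < (m%:R : R) by rewrite ltr0n.
have L1 : 1 <= ln (m.+1%:R : R).
  have : ln (4 : R) <= ln m.+1%:R by rewrite ler_ln ?posrE // ler_nat ltnS (leq_trans _ m4).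
  have -> : (4 : R) = 2 * 2 by rewrite -natrM.
  rewrite lnM ?posrE //; lra.
set n := (m.+1%:R : R) in np L1 *.
set L := ln n in L1 *.
set K := L / ln 2.
set a0 := eps * ln 2 / (4 * (1 + L)).
set Q := n `^ ((p - 1) / p).
set M := K * Q / a0.
have K0 : 0 < K by rewrite divr_gt0 // (lt_le_trans ltr01).
have a0p : 0 < a0 by rewrite /a0 divr_gt0 ?mulr_gt0 // addr_gt0 // (lt_le_trans ltr01).
have Q1 : 1 <= Q.
  apply: le_trans (_ : n `^ 0 <= _); first by rewrite powRr0.
  apply: ler_powR; first by rewrite /n ler1n.
  by rewrite divr_ge0 ?subr_ge0 ?(ltW p1) // (le_trans ler01 (ltW p1)).
have M0 : 0 < M by rewrite /M divr_gt0 // mulr_gt0 // (lt_le_trans ltr01).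
have hMdef : M = (ln m.+1%:R / ln 2) * m.+1%:R `^ ((p - 1) / p) /
                 (eps * ln 2 / (4 * (1 + ln m.+1%:R))) by [].
exists (Aset R m M).
split; first by exists (vtx R m M (Ordinal m0)); apply: Aset_vtx.
split; first by apply: approx.
split.
  rewrite /hausdorff le_max; apply/orP; right.
  apply: le_trans (ereal_sup_ubound _); last by exists (b0 R m M) => //; apply: b0_hull.
  rewrite /dist_set; apply: le_ereal_inf_tmp => _ [a Aa <-]; rewrite lee_fin /log2.
  apply: dist_lb => //.
  have hln : L - ln m%:R <= m%:R^-1.
    rewrite /L -ln_div ?posrE //.
    apply: le_trans (@ln_le_sub1 R (n / m%:R) _) _; first by rewrite divr_gt0.
    by rewrite /n -natr1 mulrDl divff ?gt_eqF // mul1r addrC addKr.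
  set u := (m%:R : R)^-1 in hln *.
  have um : u * m%:R = 1 by rewrite mulVf ?gt_eqF.
  have u0 : 0 < u by rewrite invr_gt0.
  have h4 : 4 < m%:R * eps by rewrite -ltr_pdivrMr.
  have h5 : u * 4 < u * (m%:R * eps) by rewrite ltr_pM2l.
  rewrite mulrA um mul1r in h5.
  have h6 : eps * (1 / 2) <= eps * ln 2 by rewrite ler_wpM2l // ltW.
  rewrite -/n -/L; lra.
rewrite /diam; apply: ge_ereal_sup => _ [v Av [w Aw <-]]; rewrite lee_fin.
have KM : K <= M.
  rewrite /M -mulrA ler_peMr ?(ltW K0) //.
  rewrite ler_pdivlMr // mul1r (le_trans _ Q1) //.
  rewrite /a0 ler_pdivrMr ?mul1r ?mulr_gt0 ?addr_gt0 // ?(lt_le_trans ltr01) //.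
  have : eps * ln 2 <= eps * 1 by rewrite ler_wpM2l // ltW.
  lra.
have lmK : ln m%:R / ln 2 <= K.
  rewrite /K ler_pM2r ?invr_gt0 //.
  by rewrite ler_ln ?posrE // /n ler_nat.
apply: le_trans (@diam_le R p m M p1 M0 v w Av Aw (le_trans lmK KM)) _.
rewrite /log2 -/n -/L -/K -/Q.
have ne : 1 + L != 0 by rewrite gt_eqF // addr_gt0 // (lt_le_trans ltr01).
have e1 : 3 * M = (12 * L * (1 + L)) * (Q / (eps * ln 2 ^+ 2)).
  rewrite /M /K /a0; field.
  by rewrite ne !gt_eqF.
have e2 : 25 / eps * Q * K ^+ 2 = (25 * L ^+ 2) * (Q / (eps * ln 2 ^+ 2)).
  rewrite /K; field.
  by rewrite !gt_eqF.
rewrite e1 e2 ler_wpM2r //.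
  by rewrite divr_ge0 ?mulr_ge0 ?ltW // (lt_le_trans ltr01).
nra.
Qed.
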